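(* Let $n\ge1$ and let $U\subseteq\mathbb{R}^{1\times n}$ be a non-empty open set. For every sequence of nowhere constant continuous functions $f_k:U\to\mathbb{R}^{1\times n}$, $k\ge1$, the set $$\bigcap_{k\ge1}f_k^{-1}(\mathscr{L}^{*}_{1,n})\cap\mathscr{L}_{1,n}$$ is a dense $G_\delta$ subset of $U$. In particular there is a dense $G_\delta$ set $\Lambda\subseteq\mathscr{L}_{1,n}\cap U$ (dense in $U$) with $f_k(A)\in\mathscr{L}^*_{1,n}$ for all $A\in\Lambda$ and all $k\ge1$.
   Context: $\Vert\cdot\Vert$ is the supremum norm; a real $m\times n$ matrix $A$ is a Liouville matrix if $A\mathbf{q}-\mathbf{p}\neq\mathbf{0}$ for all nonzero $(\mathbf{q},\mathbf{p})\in\mathbb{Z}^n\times\mathbb{Z}^m$ and for every $N$ there exist $\mathbf{p}\in\mathbb{Z}^m$, $\mathbf{q}\in\mathbb{Z}^n\setminus\{\mathbf{0}\}$ with $\Vert A\mathbf{q}-\mathbf{p}\Vert<\Vert\mathbf{q}\Vert^{-N}$; $\mathscr{L}_{m,n}$ is the set of these. $\mathscr{L}^*_{m,n}$ is the set of $A\in\mathbb{R}^{m\times n}\setminus\mathbb{Q}^{m\times n}$ such that for every $N$ there exist $\mathbf{p}\in\mathbb{Z}^m$, $\mathbf{q}\in\mathbb{Z}^n\setminus\{\mathbf{0}\}$ with $\Vert A\mathbf{q}-\mathbf{p}\Vert<\Vert\mathbf{q}\Vert^{-N}$. A function on an open set $U$ is nowhere constant if it is not constant on any non-empty open subset of $U$.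 $\mathbb{R}^{1\times n}\cong\mathbb{R}^n$. *)

(* Defs.v *)
From HB Require Import structures.
From mathcomp Require Import all_boot all_order all_algebra.
From mathcomp Require Import all_classical all_reals all_analysis.
From mathcomp Require Import borel_hierarchy.
Set Implicit Arguments. Unset Strict Implicit. Unset Printing Implicit Defensive.
Import Order.TTheory GRing.Theory Num.Theory.
Import numFieldNormedType.Exports.
Local Open Scope classical_set_scope.
Local Open Scope ring_scope.

Definition supnorm {R : realType} {m : nat} (v : 'cV[R]_m) : R :=
  \big[Num.max/0]_(i < m) `|v i 0|.

Definition zvec {R : realType} {m : nat} (q : 'cV[int]_m) : 'cV[R]_m :=
  map_mx (fun z : int => z%:~R) q.

Definition approx_err {R : realType} {m n : nat} (A : 'M[R]_(m, n))
  (q : 'cV[int]_n) (p : 'cV[int]_m) : 'cV[R]_m :=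
  A *m zvec q - zvec p.

Definition is_rational {R : realType} (x : R) : Prop := exists r : rat, x = ratr r.

Definition Liouville {R : realType} {m n : nat} (A : 'M[R]_(m, n)) : Prop :=
  (forall (q : 'cV[int]_n) (p : 'cV[int]_m),
      (q != 0) || (p != 0) -> approx_err A q p != 0) /\
  (forall N : nat, exists (p : 'cV[int]_m) (q : 'cV[int]_n),
      q != 0 /\ supnorm (approx_err A q p) < supnorm (zvec q : 'cV[R]_n) ^- N).

Definition Liouville_star {R : realType} {m n : nat} (A : 'M[R]_(m, n)) : Prop :=
  (~ forall i j, is_rational (A i j)) /\
  (forall N : nat, exists (p : 'cV[int]_m) (q : 'cV[int]_n),
      q != 0 /\ supnorm (approx_err A q p) < supnorm (zvec q : 'cV[R]_n) ^- N).

Definition nowhere_constant {T' : Type} {tT : topologicalType}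
  (U : set tT) (f : tT -> T') : Prop :=
  forall V : set tT, open V -> V !=set0 -> V `<=` U ->
    exists x y, V x /\ V y /\ f x <> f y.

(* Main.v *)
Require Import Defs.
From HB Require Import structures.
From mathcomp Require Import all_boot all_order all_algebra.
From mathcomp Require Import all_classical all_reals all_analysis.
From mathcomp Require Import borel_hierarchy.
From mathcomp Require Import ring lra.
Import Order.TTheory GRing.Theory Num.Theory.
Import numFieldNormedType.Exports.
Local Open Scope classical_set_scope.
Local Open Scope ring_scope.

Set Implicit Arguments. Unset Strict Implicit. Unset Printing Implicit Defensive.

Lemma baire_U (R : realType) (T : completeNormedModType R) (I : countType)
  (U : set T) (G : I -> set T) :
  open U -> (forall i, open (U `&` G i)) ->
  (forall i (V : set T), open V -> V !=set0 -> V `<=` U -> V `&` G i !=set0) ->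
  Gdelta (U `&` \bigcap_i G i) /\ U `<=` closure (U `&` \bigcap_i G i).
Proof.
move=> oU oG dG.
pose F k := U `&` (if @unpickle I k is Some i then G i else setT).
have oF k : open (F k).
  by rewrite /F; case: unpickle => [i|]; [exact: oG|rewrite setIT].
have eqS : U `&` \bigcap_i G i = \bigcap_k F k.
  apply/seteqP; split.
  - move=> x [Ux Gx] k _; rewrite /F; case: unpickle => [i|]; split => //.
    exact: Gx.
  - move=> x Fx; split; first by have [] := Fx 0%N Logic.I.
    move=> i _; have := Fx (pickle i) Logic.I; rewrite /F pickleK; by case.
split; first by exists F.
pose F' k := F k `|` ~` closure U.
have odF' : forall k, open (F' k) /\ dense (F' k).
  move=> k; split.
    by apply: openU => //; apply/closed_openC/closed_closure.
  move=> O [z Oz] oO.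
  case: (pselect ((O `&` U) !=set0)) => [OU|nOU].
  - rewrite /F' /F; case Ek: unpickle => [i|].
      have [x [[Ox Ux] Gx]] := dG i (O `&` U) (openI oO oU) OU (@subIsetr _ _ _).
      by exists x; split => //; left.
    by case: OU => x [Ox Ux]; exists x; split => //; left.
  - exists z; split => //; right => cz; apply: nOU.
    have := cz O; rewrite setIC; apply.
    by move: oO; rewrite openE => /(_ _ Oz).
have D := @Baire R T F' odF'.
move=> x Ux B; rewrite nbhsE; move=> [W [oW Wx] WB].
have [y [[Wy Uy] Fy]] := D (W `&` U) (ex_intro _ x (conj Wx Ux)) (openI oW oU).
exists y; split; last exact: WB.
rewrite eqS => k _; case: (Fy k Logic.I) => // /(_ (subset_closure Uy)) [].
Qed.

Section main.
Variable R : realType.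

Lemma supnorm_ge m (v : 'cV[R]_m) i : `|v i 0| <= supnorm v.
Proof. by apply/bigmax_geP; right; exists i. Qed.

Lemma supnorm1 (v : 'cV[R]_1) : supnorm v = `|v 0 0|.
Proof. by rewrite /supnorm big_ord_recl big_ord0 max_l. Qed.

Definition Lf n (B : 'rV[R]_n) (q : 'cV[int]_n) : R := \sum_k B 0 k * (q k 0)%:~R.

Lemma err00 n (B : 'rV[R]_n) q p :
  approx_err B q p 0 0 = Lf B q - (p 0 0)%:~R.
Proof.
rewrite /approx_err /zvec !mxE; congr (_ - _); apply: eq_bigr => k _.
by rewrite mxE.
Qed.

Lemma supnorm_err n (B : 'rV[R]_n) q p :
  supnorm (approx_err B q p) = `|Lf B q - (p 0 0)%:~R|.
Proof. by rewrite supnorm1 err00. Qed.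

Lemma err_neq0 n (B : 'rV[R]_n) q p :
  (approx_err B q p != 0) = (Lf B q != (p 0 0)%:~R).
Proof.
rewrite -[Lf B q == _]subr_eq0 -err00; apply/idP/idP; apply: contra.
  by move/eqP => h; apply/eqP/matrixP => i j; rewrite !ord1 [RHS]mxE; exact h.
by move/eqP => ->; rewrite mxE.
Qed.

Lemma Lf_cont n (q : 'cV[int]_n) : continuous (fun B : 'rV[R]_n => Lf B q).
Proof.
rewrite /Lf; elim: (index_enum _) => [|k s ih] /=.
  under eq_fun do rewrite big_nil; exact: cst_continuous.
under eq_fun do rewrite big_cons.
move=> B.
apply: (@cvgD _ _ _ (nbhs B) _ (fun B : 'rV[R]_n => B 0 k * (q k 0)%:~R)
  (fun B => \sum_(j <- s) B 0 j * (q j 0)%:~R)); last exact: ih.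
apply: cvgMl; exact: coord_continuous.
Qed.

Lemma LfD n (B C : 'rV[R]_n) q : Lf (B + C) q = Lf B q + Lf C q.
Proof. by rewrite /Lf -big_split; apply: eq_bigr => k _; rewrite mxE mulrDl. Qed.

Lemma LfZ n t (B : 'rV[R]_n) q : Lf (t *: B) q = t * Lf B q.
Proof. by rewrite /Lf mulr_sumr; apply: eq_bigr => k _; rewrite mxE mulrA. Qed.

Definition ON n (N : nat) (B : 'rV[R]_n) :=
  exists (p : 'cV[int]_1) (q : 'cV[int]_n),
    q != 0 /\ supnorm (approx_err B q p) < supnorm (zvec q : 'cV[R]_n) ^- N.

Lemma open_neq (c : R) : open [set x : R | x != c].
Proof.
have -> : [set x : R | x != c] = [set x | x < c] `|` [set x | c < x].
  apply/seteqP; split => x /=.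
    by rewrite neq_lt => /orP[]; [left|right].
  by case => h; [rewrite lt_eqF|rewrite gt_eqF].
by apply: openU; [exact: open_lt|exact: open_gt].
Qed.

Lemma open_ON n N : open (@ON n N).
Proof.
rewrite openE => B [p [q [q0 h]]].
pose W := [set B' : 'rV[R]_n |
  `|Lf B' q - (p 0 0)%:~R| < supnorm (zvec q : 'cV[R]_n) ^- N].
have oW : open W.
  have : continuous (fun B' => `|Lf B' q - (p 0 0)%:~R|).
    move=> x; apply: (@cvg_norm _ _ _ (nbhs x) _).
    apply: (@cvgB _ _ _ (nbhs x) _ (fun B' => Lf B' q) (fun=> (p 0 0)%:~R)).
      exact: Lf_cont.
    apply: cvg_cst.
  by move/continuousP => /(_ _ (@open_lt _ (supnorm (zvec q : 'cV[R]_n) ^- N))).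
rewrite supnorm_err in h.
move: oW; rewrite openE => /(_ B h).
apply: filterS => B' hB'; exists p, q; split => //; by rewrite supnorm_err.
Qed.

Lemma open_NR n (r : 'M[rat]_(1, n)) : open [set B : 'rV[R]_n | B != map_mx ratr r].
Proof.
rewrite openE => B /= hB.
have [j hj] : exists j, B 0 j != (map_mx ratr r : 'rV[R]_n) 0 j.
  case: (pselect (exists j, B 0 j != (map_mx ratr r : 'rV[R]_n) 0 j)) => // hn.
  move/negP: hB; case; apply/eqP/rowP => j; apply/eqP/negPn/negP => h.
  by apply: hn; exists j.
have := (@continuousP _ _ _).1 (@coord_continuous R 1 n 0 j) _ (@open_neq ((map_mx ratr r : 'rV[R]_n) 0 j)).
rewrite openE => /(_ B hj); apply: filterS => B' /= hB'.
by apply: contra hB' => /eqP ->.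
Qed.


Lemma open_dir n (V : set 'rV[R]_n) a (D : 'rV[R]_n) :
  open V -> V a -> exists2 t : R, 0 < t & forall s, 0 <= s <= t -> V (a + s *: D).
Proof.
move=> oV Va; have : nbhs a V by move: oV; rewrite openE; apply.
move/nbhs_ballP => [e e0 eV].
have D1 : 0 < `|D| + 1 by rewrite ltr_wpDl.
exists (e / 2 / (`|D| + 1)); first by rewrite !divr_gt0.
move=> s /andP[s0 st]; apply: eV; rewrite -ball_normE /ball_ /=.
rewrite opprD addrA subrr add0r normrN normrZ ger0_norm //.
have h1 : s * `|D| <= e / 2 / (`|D| + 1) * `|D|.
  by apply: ler_wpM2r.
have h2 : e / 2 / (`|D| + 1) * `|D| <= e / 2.
  have -> : e / 2 / (`|D| + 1) * `|D| = e / 2 * (`|D| / (`|D| + 1)).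
    by rewrite [RHS]mulrA mulrAC.
  rewrite ler_piMr ?divr_ge0 ?ltW //.
  by rewrite ltr_pdivrMr // mul1r ltrDl.
apply: (le_lt_trans h1); apply: (le_lt_trans h2).
by rewrite ltr_pdivrMr // mulr_natr mulr2n ltrDl.
Qed.

Lemma ball_convex n (a x y : 'rV[R]_n) e s :
  ball a e x -> ball a e y -> 0 <= s <= 1 -> ball a e (x + s *: (y - x)).
Proof.
rewrite -!ball_normE /ball_ /= => hx hy /andP[s0 s1].
have -> : a - (x + s *: (y - x)) = (1 - s) *: (a - x) + s *: (a - y).
  by apply/matrixP => i j; rewrite !mxE; ring.
apply: (le_lt_trans (ler_normD _ _)); rewrite !normrZ !ger0_norm ?subr_ge0 //.
have [->|s1'] := eqVneq s 1.
  by rewrite subrr mul0r add0r mul1r.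
have s1s : s < 1 by rewrite lt_neqAle s1' s1.
have h1 : (1 - s) * `|a - x| < (1 - s) * e by rewrite ltr_pM2l // subr_gt0.
have h2 : s * `|a - y| <= s * e by rewrite ler_wpM2l // ltW.
apply: (lt_le_trans (ltr_leD h1 h2)).
by rewrite -mulrDl subrK mul1r.
Qed.

Lemma seg_ON n (g : 'rV[R]_n -> 'rV[R]_n) (x y : 'rV[R]_n) N :
  (forall s, 0 <= s <= 1 -> {for x + s *: (y - x), continuous g}) ->
  g x != g y -> exists2 s, 0 <= s <= 1 & ON N (g (x + s *: (y - x))).
Proof.
move=> gc gxy.
have [j hj] : exists j, g x 0 j != g y 0 j.
  case: (pselect (exists j, g x 0 j != g y 0 j)) => // hn.
  move/negP: gxy; case; apply/eqP/rowP => j; apply/eqP/negPn/negP => h.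
  by apply: hn; exists j.
pose h s := g (x + s *: (y - x)) 0 j.
have h0 : h 0 = g x 0 j by rewrite /h scale0r addr0.
have h1 : h 1 = g y 0 j by rewrite /h scale1r addrC subrK.
have hc : {within `[0, 1], continuous h}.
  apply: continuous_in_subspaceT => s; rewrite inE /= in_itv /= => hs.
  apply: (@continuous_comp _ _ _ (fun s : R => x + s *: (y - x)) (fun B => g B 0 j)).
    apply: (@cvgD _ _ _ (nbhs s) _ (fun=> x) (fun s : R => s *: (y - x))).
      by apply: cvg_cst.
    by apply: cvgZl; apply: cvg_id.
  apply: (@continuous_comp _ _ _ g (fun B : 'rV[R]_n => B 0 j)).
    exact: gc.
  exact: coord_continuous.
pose a := Num.min (h 0) (h 1); pose b := Num.max (h 0) (h 1).
have ab : a < b.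
  rewrite /a /b h0 h1; case: (ltgtP (g x 0 j) (g y 0 j)) hj => //.
pose M := (Num.trunc ((b - a)^-1)).+1.
have Mpos : 0 < M%:R :> R by rewrite ltr0n.
have hM : 1 < M%:R * (b - a).
  by rewrite -ltr_pdivrMr ?subr_gt0 // mul1r; exact: truncnS_gt.
pose P := Num.ceil (M%:R * a).
pose c : R := P%:~R / M%:R.
have hac : a <= c by rewrite /c ler_pdivlMr // mulrC; exact: ceil_ge.
have hP : P%:~R - 1 < M%:R * a by have := ceilB1_lt (M%:R * a); rewrite rmorphB.
have hcb : c <= b.
  rewrite /c ler_pdivrMr //; rewrite mulrBr in hM; rewrite (mulrC b); lra.
have [s s01 hs] : exists2 s, s \in `[0, 1] & h s = c.
  by apply: IVT => //; rewrite -/a -/b hac hcb.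
move: s01; rewrite in_itv /= => s01.
exists s => //.
exists (const_mx P), (\matrix_(i, k) (if i == j then M%:Z else 0)).
split.
  apply/eqP => /matrixP /(_ j 0); rewrite !mxE eqxx => /eqP.
  by rewrite /M.
rewrite supnorm_err.
have -> : Lf (g (x + s *: (y - x))) (\matrix_(i, k) (if i == j then M%:Z else 0)) = c * M%:R.
  rewrite /Lf (bigD1 j) //= big1 => [|k kj]; last by rewrite mxE (negbTE kj) mulr0.
  by rewrite mxE eqxx addr0 -[g _ 0 j]/(h s) hs.
rewrite mxE /c divfK ?subrr ?normr0; last by rewrite gt_eqF.
rewrite invr_gt0 exprn_gt0 //.
apply: (lt_le_trans _ (supnorm_ge _ j)).
by rewrite /zvec !mxE eqxx normr_nat.
Qed.

Lemma ON_dense n (g : 'rV[R]_n -> 'rV[R]_n) (V : set 'rV[R]_n) N :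
  open V -> V !=set0 -> (forall z, V z -> {for z, continuous g}) ->
  (forall W, open W -> W !=set0 -> W `<=` V -> exists x y, [/\ W x, W y & g x <> g y]) ->
  exists z, V z /\ ON N (g z).
Proof.
move=> oV [a Va] gc nc.
have : nbhs a V by move: oV; rewrite openE; apply.
move/nbhs_ballP => [e e0 eV].
have [x [y [bx b_y gxy]]] := nc (ball a e) (ball_open _ _) (ex_intro _ a (ballxx _ e0)) eV.
have seg s : 0 <= s <= 1 -> ball a e (x + s *: (y - x)).
  by move=> hs; exact: ball_convex.
have [|s hs hON] := @seg_ON n g x y N (fun s hs => gc _ (eV _ (seg s hs))).
  by apply/eqP.
by exists (x + s *: (y - x)); split => //; exact: eV (seg s hs).
Qed.

Lemma id_nc n (V : set 'rV[R]_n) : (0 < n)%N -> open V -> V !=set0 ->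
  exists x y, [/\ V x, V y & x <> y].
Proof.
move=> n0 oV [a Va]; pose D := const_mx 1 : 'rV[R]_n.
have [t t0 ht] := open_dir D oV Va.
exists a, (a + t *: D); split => //; first by apply: ht; rewrite lexx ltW.
move=> E; have := congr1 (fun B : 'rV[R]_n => B 0 (Ordinal n0) - a 0 (Ordinal n0)) E.
rewrite /= !mxE mulr1 addrAC !subrr add0r => t0'.
by move: t0; rewrite -t0' ltxx.
Qed.

End main.

HB.instance Definition _ (R : realType) (m n : nat) := Complete.on 'M[R]_(m, n).
Unset Implicit Arguments.

Theorem theorem5 (R : realType) (n : nat) (U : set 'rV[R]_n)
  (f : nat -> 'rV[R]_n -> 'rV[R]_n) :
  (0 < n)%N -> open U -> U !=set0 ->
  (forall k, {within U, continuous (f k)}) ->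
  (forall k, nowhere_constant U (f k)) ->
  let S := [set A : 'rV[R]_n | U A /\ Liouville A /\
                               forall k, Liouville_star (f k A)] in
  Gdelta S /\ U `<=` closure S.
Proof.
move=> n0 oU U0 fc fnc S.
have fcin k : {in U, continuous (f k)} by rewrite -continuous_open_subspace.
pose I := (('cV[int]_n * 'cV[int]_1) + (nat + ((nat * 'M[rat]_(1, n)) + (nat * nat))))%type.
pose G (i : I) : set 'rV[R]_n := match i with
 | inl (q, p) => if (q != 0) || (p != 0) then [set B | approx_err B q p != 0] else setT
 | inr (inl N) => ON N
 | inr (inr (inl (k, r))) => f k @^-1` [set B | B != map_mx ratr r]
 | inr (inr (inr (k, N))) => f k @^-1` ON N
 end.
have eS : S = U `&` \bigcap_i G i.
  apply/seteqP; split.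
  - move=> A [UA [[L1 L2] LS]]; split => // -[[q p]|[N|[[k r]|[k N]]]] _ /=.
    + by case: ifP => // qp; exact: L1 q p qp.
    + exact: L2 N.
    + have [h _] := LS k; apply/eqP => E; apply: h => i j'.
      by exists (r i j'); rewrite E mxE.
    + exact: (LS k).2 N.
  - move=> A [UA GA]; split => //; split.
    + split.
        by move=> q p qp; have := GA (inl (q, p)) Logic.I; rewrite /= qp.
      by move=> N; exact: (GA (inr (inl N)) Logic.I).
    + move=> k; split.
        move=> Hall.
        pose r := \matrix_(i, j') projT1 (cid (Hall i j')).
        have := GA (inr (inr (inl (k, r)))) Logic.I => /= /eqP; apply.
        by apply/matrixP => i j'; rewrite !mxE; exact: projT2 (cid (Hall i j')).
      by move=> N; exact: (GA (inr (inr (inr (k, N)))) Logic.I).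
rewrite eS; apply: baire_U => //.
- case => [[q p]|[N|[[k r]|[k N]]]] /=.
  { case: ifP => _; last by rewrite setIT.
    apply: openI => //.
    rewrite (_ : [set B | approx_err B q p != 0] =
                 (fun B => Lf B q) @^-1` [set x | x != (p 0 0)%:~R]).
      exact: ((@continuousP _ _ _).1 (@Lf_cont R n q) _ (@open_neq R _)).
    by apply: funext => B /=; rewrite err_neq0.
  }
  { by apply: (openI oU); exact: open_ON.
  }
  { by have := (continuous_inP (f k) oU).1 (fcin k); apply; exact: open_NR.
  }
  { by have := (continuous_inP (f k) oU).1 (fcin k); apply; exact: open_ON.
  }
- case => [[q p]|[N|[[k r]|[k N]]]] V oV V0 VU /=.
  { case: ifP => qp; last by rewrite setIT.
    case: V0 => a Va.
    case: (boolP (approx_err a q p != 0)) => [h|]; first by exists a.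
    rewrite err_neq0 negbK => /eqP ha.
    have q0 : q != 0.
      apply: contraTneq qp => q0'; rewrite q0' eqxx /=.
      apply/negPn/eqP/matrixP => i j; rewrite !ord1 mxE.
      apply/eqP; rewrite -(intr_eq0 R) -ha /Lf big1 // => k _.
      by rewrite q0' mxE mulr0.
    have [j qj] : exists j, q j 0 != 0.
      case: (pselect (exists j, q j 0 != 0)) => // hn.
      move/negP: q0; case; apply/eqP/colP => j; rewrite mxE.
      by apply/eqP/negPn/negP => h; apply: hn; exists j.
    pose D := delta_mx 0 j : 'rV[R]_n.
    have [t t0 ht] := open_dir D oV Va.
    exists (a + t *: D); split; first by apply: ht; rewrite lexx ltW.
    rewrite /= err_neq0 LfD LfZ ha.
    have -> : Lf D q = (q j 0)%:~R.
      rewrite /Lf (bigD1 j) //= big1 => [|k kj]; last by rewrite mxE (negbTE kj) andbF mul0r.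
      by rewrite mxE !eqxx /= mul1r addr0.
    rewrite -subr_eq0 addrC addKr; apply: mulf_neq0; first by rewrite gt_eqF.
    by rewrite intr_eq0.
  }
  { have [z [Vz hz]] := @ON_dense R n (fun B => B) V N oV V0 (fun z _ => cvg_id)
      (fun W oW W0 _ => id_nc n0 oW W0).
    by exists z.
  }
  { case: V0 => a Va.
    have [x [y [Vx [Vy fxy]]]] := fnc k V oV (ex_intro _ a Va) VU.
    case: (boolP (f k x == map_mx ratr r)) => hx; last by exists x.
    exists y; split => //=; apply/eqP => E; apply: fxy; by rewrite (eqP hx) E.
  }
  { have nc : forall W, open W -> W !=set0 -> W `<=` V ->
        exists x y, [/\ W x, W y & f k x <> f k y].
      move=> W oW W0 WV.
      have [x [y [Wx [Wy fxy]]]] := fnc k W oW W0 (subset_trans WV VU).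
      by exists x, y.
    have [z [Vz hz]] := @ON_dense R n (f k) V N oV V0
      (fun z Vz => fcin k z (mem_set (VU z Vz))) nc.
    by exists z.
  }
Qed.
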